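(* Fix $\epsilon>0$. For $x\in X$ define $g_\epsilon(x)=\sum_{n=0}^\infty e^{-n\epsilon}\mu_n(x)$ if $\lambda_*(x)=0$, and $g_\epsilon(x)=1$ otherwise; write $g^\alpha_\epsilon=g_\epsilon|_{X_\alpha}$. Then for every $x\in X_\alpha$ with $\lambda_*(x)=0$ and every plaque chain $\mathcal{Q}=\{P_\alpha(x),P_\beta(y)\}$ of length one, $$e^{-\epsilon}g^\alpha_\epsilon(x)\le g^\beta_\epsilon(y)\cdot h_{\mathcal{Q}}'(x)\le e^{\epsilon}g^\alpha_\epsilon(x).$$
   Context: $M$ is a closed Riemannian manifold with a codimension-one $C^1$-foliation with oriented normal bundle; fix a finite regular atlas of transversally orientation-preserving charts $\varphi_\alpha\colon U_\alpha\to(-1,1)^n\times(-1,1)$ with transverse coordinate spaces $X_\alpha=(-1,1)$ and $X$ their disjoint union; $P_\alpha(x)$ is the plaque with transverse coordinate $x$; transition maps $h_{\beta\alpha}$ send $x$ to $y$ when $P_\alpha(x)\cap P_\beta(y)\ne\emptyset$; for a plaque chain $\mathcal{P}$ (sequence of plaques with consecutive ones intersecting) of length $\|\mathcal{P}\|$ (number of plaques minus one), $h_{\mathcal{P}}$ is the composition of transition maps on its maximal connected domain $D_{\mathcal{P}}$. $\mu_0(x)=1$, $\mu_n(x)=\sup\{h'_{\mathcal{P}}(x):x\in D_{\mathcal{P}},\|\mathcal{P}\|\le n\}$, and $\lambda_*(x)=\limsup_n\frac1n\log\mu_n(x)\ge0$; the series defining $g_\epsilon$ converges when $\lambda_*(x)=0$,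 and $\lambda_*$ is constant on holonomy orbits. *)

(* Defs.v *)
(* Abstract transverse (holonomy pseudogroup) data of a
   finite regular foliated atlas of a codimension-one C^1 foliation. *)
From HB Require Import structures.
From mathcomp Require Import all_boot all_order all_algebra.
From mathcomp Require Import all_classical all_reals all_analysis.
Set Implicit Arguments. Unset Strict Implicit. Unset Printing Implicit Defensive.
Import Order.TTheory GRing.Theory Num.Theory.
Import numFieldNormedType.Exports.
Local Open Scope classical_set_scope.
Local Open Scope ring_scope.

(* The transverse coordinate space of each chart is (-1,1); the point x of
   X_alpha is written (alpha, x).  [tdom b a] is the set of x such that the
   plaque P_a(x) plaques_meet some plaque of chart b, and [trans b a] = h_{ba} is the
   transition map (only meaningful on [tdom b a]). *)
Record foliated_atlas (R : realType) (I : finType) := FoliatedAtlas {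
  tdom : I -> I -> set R;
  trans : I -> I -> R -> R;
  tdom_sub : forall a b, tdom b a `<=` `]-1, 1[%classic;
  tdom_open : forall a b, open (tdom b a);
  trans_dom : forall a b x, tdom b a x -> tdom a b (trans b a x);
  trans_inv : forall a b x, tdom b a x -> trans a b (trans b a x) = x;
  tdom_self : forall a, tdom a a = `]-1, 1[%classic;
  trans_self : forall a x, tdom a a x -> trans a a x = x;
  trans_derivable : forall a b x, tdom b a x -> derivable (trans b a) x 1;
  trans_C1 : forall a b, {within tdom b a, continuous derive1 (trans b a)};
  trans_orient : forall a b x, tdom b a x -> 0 < derive1 (trans b a) x
}.

Section Chains.
Context {R : realType} {I : finType} (F : foliated_atlas R I).

Definition plaques_meet (a : I) (x : R) (b : I) (y : R) : Prop :=
  tdom F b a x /\ y = trans F b a x.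

(* A plaque chain is given by its first plaque P_{a0}(x0) and the list
   s = [(a1,x1); ...; (an,xn)] of the following plaques; its length is size s. *)
Fixpoint is_chain (a0 : I) (x0 : R) (s : seq (I * R)) : Prop :=
  match s with
  | [::] => `]-1, 1[%classic x0
  | (b, y) :: s' => plaques_meet a0 x0 b y /\ is_chain b y s'
  end.

Fixpoint hchain (a0 : I) (s : seq (I * R)) : R -> R :=
  match s with
  | [::] => id
  | (b, _) :: s' => hchain b s' \o trans F b a0
  end.

Fixpoint dchain (a0 : I) (s : seq (I * R)) : set R :=
  match s with
  | [::] => `]-1, 1[%classic
  | (b, _) :: s' => [set t | tdom F b a0 t /\ dchain b s' (trans F b a0 t)]
  end.

Definition Dchain (a0 : I) (x0 : R) (s : seq (I * R)) : set R :=
  connected_component (dchain a0 s) x0.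

Local Open Scope ereal_scope.

Definition mu (n : nat) (a : I) (x : R) : \bar R :=
  match n with
  | O => 1
  | _ => ereal_sup [set (derive1 (hchain a s) x)%:E | s in
           [set s | exists x0, [/\ is_chain a x0 s, Dchain a x0 s x &
                                   (size s <= n)%N]]]
  end.

Definition lambda_star (a : I) (x : R) : \bar R :=
  limn_esup (fun n => (n%:R^-1)%:E * lne (mu n a x)).

Definition geps (eps : R) (a : I) (x : R) : \bar R :=
  if lambda_star a x == 0 then
    \sum_(0 <= n <oo) ((expR (- (n%:R * eps)))%:E * mu n a x)
  else 1.

End Chains.

(* Main.v *)
Require Import Defs.
From HB Require Import structures.
From mathcomp Require Import all_boot all_order all_algebra.
From mathcomp Require Import all_classical all_reals all_analysis.
From mathcomp Require Import lra ring.
Import Order.TTheory GRing.Theory Num.Theory.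
Import numFieldNormedType.Exports.
Local Open Scope classical_set_scope.
Local Open Scope ring_scope.

Section H.
Context {R : realType} {I : finType} (F : foliated_atlas R I).

Lemma hchain_derivable a s t : dchain F a s t -> derivable (hchain F a s) t 1.
Proof.
elim: s a t => [|[c z] s IH] a t /=.
  by move=> _; exact: derivable_id.
move=> [tt' ds]; apply/derivable1_diffP; apply: differentiable_comp.
  exact/derivable1_diffP/trans_derivable.
exact/derivable1_diffP/IH.
Qed.

Lemma hchain_cons_derive a b z s t : tdom F b a t -> dchain F b s (trans F b a t) ->
  derive1 (hchain F a ((b, z) :: s)) t =
  derive1 (hchain F b s) (trans F b a t) * derive1 (trans F b a) t.
Proof.
move=> tt' ds /=; rewrite derive1_comp //.
  exact: trans_derivable.
exact: hchain_derivable.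
Qed.

Lemma inv_derive a b x : tdom F b a x ->
  derive1 (trans F a b) (trans F b a x) * derive1 (trans F b a) x = 1.
Proof.
move=> hx; rewrite -derive1_comp; last 2 first.
- exact: trans_derivable.
- exact/trans_derivable/trans_dom.
rewrite -(derive1_id x) !derive1E; apply: near_eq_derive.
have : open (tdom F b a) by exact: tdom_open.
move=> /[dup] op; rewrite openE => /(_ x hx).
apply: filterS => t ht /=; exact: trans_inv.
Qed.


Fixpoint fill (a : I) (s : seq (I * R)) (t : R) : seq (I * R) :=
  match s with
  | [::] => [::]
  | (c, _) :: s' => (c, trans F c a t) :: fill c s' (trans F c a t)
  end.

Lemma hchain_fill a s t : hchain F a (fill a s t) = hchain F a s.
Proof. by elim: s a t => [|[c z] s IH] a t //=; rewrite IH. Qed.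

Lemma dchain_fill a s t : dchain F a (fill a s t) = dchain F a s.
Proof. by elim: s a t => [|[c z] s IH] a t //=; rewrite IH. Qed.

Lemma size_fill a s t : size (fill a s t) = size s.
Proof. by elim: s a t => [|[c z] s IH] a t //=; rewrite IH. Qed.

Lemma is_chain_fill a s t : dchain F a s t -> is_chain F a t (fill a s t).
Proof.
elim: s a t => [|[c z] s IH] a t //= [h1 h2]; split; last exact: IH.
by split.
Qed.

Local Open Scope ereal_scope.

Lemma mu_ge a s (t : R) n : dchain F a s t -> (size s <= n)%N ->
  (derive1 (hchain F a s) t)%:E <= mu F n a t.
Proof.
case: n => [|n] ds sz.
  by case: s ds sz => //= _ _; rewrite derive1_id.
apply: ereal_sup_ubound; exists (fill a s t); last by rewrite hchain_fill.
exists t; split.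
- exact: is_chain_fill.
- by apply: connected_component_refl; rewrite dchain_fill.
- by rewrite size_fill.
Qed.

Lemma mu_le a (t : R) n M : (0 < n)%N ->
  (forall s, dchain F a s t -> (size s <= n)%N -> (derive1 (hchain F a s) t)%:E <= M) ->
  mu F n a t <= M.
Proof.
case: n => [//|n] _ H /=; apply: ub_ereal_sup => _ [s [x0 [_ Ds sz]] <-].
by apply: H => //; exact: connected_component_sub Ds.
Qed.

Lemma mu_ge1 a (t : R) n : (`]-1, 1[%classic t)%R -> 1 <= mu F n a t.
Proof. by move=> ht; have := @mu_ge a [::] t n ht isT; rewrite /= derive1_id. Qed.

Lemma mu_shift a b (t : R) n : tdom F b a t ->
  (derive1 (trans F b a) t)%:E * mu F n b (trans F b a t) <= mu F n.+1 a t.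
Proof.
move=> ht; set d := derive1 (trans F b a) t.
have d0 : (0 < d)%R by exact: trans_orient.
rewrite muleC -lee_pdivlMr // .
case: n => [|n].
  rewrite /= lee_pdivlMr // mul1e.
  have := @mu_ge a [:: (b, trans F b a t)] t 1.
  rewrite hchain_cons_derive //=; last by apply: tdom_sub (trans_dom ht).
  rewrite derive1_id mul1r; apply => //; split => //.
  exact: tdom_sub (trans_dom ht).
apply: mu_le => // s ds sz; rewrite lee_pdivlMr //.
have := @mu_ge a ((b, 0%R) :: s) t n.+2.
rewrite hchain_cons_derive //; apply => //; by split.
Qed.


Lemma series_cmp (w u : nat -> \bar R) (k1 k2 : R) : (0 <= k1)%R -> (0 <= k2)%R ->
  (forall n, 0 <= w n) -> (forall n, 0 <= u n) ->
  (forall n, k1%:E * w n <= k2%:E * u n.+1) ->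
  k1%:E * \sum_(0 <= n <oo) w n <= k2%:E * \sum_(0 <= n <oo) u n.
Proof.
move=> k10 k20 w0 u0 H.
rewrite -!nneseriesZl //.
apply: (@le_trans _ _ (\sum_(0 <= n <oo) (k2%:E * u (n + 1)%N))).
  apply: lee_nneseries => [i _ _|n _]; first by rewrite mule_ge0.
  by rewrite addn1.
have f0 i : 0 <= k2%:E * u i by rewrite mule_ge0.
rewrite (nneseries_addn 1 f0) (@nneseries_split _ _ 0 1) //.
rewrite add0n leeDr //; apply: sume_ge0 => i _; exact: f0.
Qed.


Lemma real_step (k : nat) (r s c d : R) : (0 < c)%R -> (1 <= s)%R -> (c * s <= r)%R ->
  (0 < d)%R -> (k.+1%:R^-1 * ln r <= d)%R -> (1 <= k)%N -> (`|ln c| / d < k%:R)%R ->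
  (k%:R^-1 * ln s <= 3 * d)%R.
Proof.
move=> c0 s1 csr d0 hr k1 hk.
have s0 : (0 < s)%R := lt_le_trans ltr01 s1.
have r0 : (0 < r)%R by apply: lt_le_trans csr; rewrite mulr_gt0.
have e1 : (ln c + ln s <= ln r)%R.
  by rewrite -lnM ?posrE ?mulr_gt0 // ler_ln ?posrE ?mulr_gt0.
have kp : (0 < k%:R :> R)%R by rewrite ltr0n.
have kp1 : (0 < k.+1%:R :> R)%R by rewrite ltr0n.
move: hr; rewrite ler_pdivrMl // => hr.
move: hk; rewrite ltr_pdivrMr // => hk.
have k1' : (1 <= k%:R :> R)%R by rewrite ler1n.
have nc := ler_norm (- ln c); rewrite normrN in nc.
rewrite ler_pdivrMl //.
have : (k.+1%:R = k%:R + 1 :> R)%R by rewrite -natr1.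
move=> ek; rewrite ek in hr.
have : (d <= k%:R * d)%R by rewrite ler_peMl // ltW.
nra.
Qed.


Lemma lambda_inv a b x : tdom F b a x -> lambda_star F a x = 0 ->
  lambda_star F b (trans F b a x) = 0.
Proof.
move=> hx hl.
set y := trans F b a x; set c := derive1 (trans F b a) x.
have c0 : (0 < c)%R by exact: trans_orient.
have y1 : (`]-1, 1[%classic y)%R by exact: tdom_sub (trans_dom hx).
pose u := fun n : nat => (n%:R^-1)%:E * lne (mu F n a x).
pose v := fun n : nat => (n%:R^-1)%:E * lne (mu F n b y).
change (limn_esup u = 0) in hl; change (limn_esup v = 0).
have v0 n : 0 <= v n.
  rewrite /v mule_ge0 // ?lee_fin ?invr_ge0 ?ler0n // lne_ge0; exact: mu_ge1.
apply/eqP; rewrite eq_le; apply/andP; split; last first.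
  rewrite limn_esup_lim; apply: lime_ge; first exact: is_cvg_esups.
  apply: nearW => n; apply: le_trans (v0 n) _; apply: ereal_sup_ubound.
  by exists n => /=.
apply/lee_addgt0Pr => e e0; rewrite add0e.
pose d := (e / 3)%R.
have d0 : (0 < d)%R by rewrite divr_gt0.
have [N HN] : exists N, forall k, (N <= k)%N -> u k <= d%:E.
  move: hl; rewrite limn_esup_lim (cvg_lim _ (@cvg_esups_inf _ u)) // => hl.
  have : ereal_inf (range (esups u)) < d%:E by rewrite hl lte_fin.
  case/ereal_inf_lt => _ [N _ <-] hN; exists N => k Nk.
  by apply: le_trans (ltW hN); apply: ereal_sup_ubound; exists k.
pose M := maxn N (maxn 1 (Num.truncn (`|ln c| / d)%R).+1).
rewrite limn_esup_lim; apply: lime_le; first exact: is_cvg_esups.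
exists M => // n /= Mn; apply: ub_ereal_sup => _ [k /= nk <-].
have Mk : (M <= k)%N by apply: leq_trans nk.
have Nk : (N <= k.+1)%N by apply: leq_trans (leqnSn _); apply: leq_trans Mk; exact: leq_maxl.
have k1 : (1 <= k)%N.
  by apply: leq_trans Mk; rewrite /M !leq_max leqnn !orbT.
have kK : (`|ln c| / d < k%:R)%R.
  apply: lt_le_trans (truncnS_gt _) _; rewrite ler_nat.
  by apply: leq_trans Mk; rewrite /M !leq_max leqnn !orbT.
have hk := HN _ Nk.
have hs := mu_shift a b x k hx; rewrite -/y -/c in hs.
have g1 := mu_ge1 a x k.+1 (tdom_sub hx).
have g2 := mu_ge1 b y k y1.
rewrite /v; rewrite /u in hk.
move: hk hs g1 g2; case: (mu F k.+1 a x) => [r| |] //; last first.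
  by rewrite /= gt0_muley // lte_fin invr_gt0 ltr0n.
case: (mu F k b y) => [s| |] //; last first.
  by rewrite gt0_muley.
move=> hk hs r1 s1; rewrite lee_fin in r1; rewrite lee_fin in s1; rewrite lee_fin in hs.
have r0 : (0 < r)%R := lt_le_trans ltr01 r1.
have s0 : (0 < s)%R := lt_le_trans ltr01 s1.
move: hk; rewrite !lne_EFin // -!EFinM !lee_fin => hk.
have -> : e = (3 * d)%R by rewrite /d mulrC -mulrA mulVf ?mulr1.
exact: (@real_step k r s c d c0 s1 hs d0 hk k1 kK).
Qed.


Lemma expR_step (eps : R) n :
  (expR (- eps) * expR (- (n%:R * eps)) = expR (- (n.+1%:R * eps)))%R.
Proof. by rewrite -expRD; congr expR; rewrite -natr1; ring. Qed.

Lemma expR_step' (eps : R) n :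
  (expR eps * expR (- (n.+1%:R * eps)) = expR (- (n%:R * eps)))%R.
Proof. by rewrite -expRD; congr expR; rewrite -natr1; ring. Qed.

End H.

Theorem lemma4p5 (R : realType) (I : finType) (F : foliated_atlas R I)
  (eps : R) (heps : 0 < eps) (a b : I) (x y : R) :
  lambda_star F a x = 0%E ->
  plaques_meet F a x b y ->
  ((expR (- eps))%:E * geps F eps a x <=
     geps F eps b y * (derive1 (trans F b a) x)%:E <=
   (expR eps)%:E * geps F eps a x)%E.
Proof.
move=> hl [hx ->].
have hly := lambda_inv F a b x hx hl.
set y' := trans F b a x in hly *.
set c := derive1 (trans F b a) x.
have c0 : (0 < c)%R by exact: trans_orient.
have hy : tdom F a b y' by exact: trans_dom.
have xy : trans F a b y' = x by exact: trans_inv.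
have cc' : (derive1 (trans F a b) y' * c = 1)%R by exact: inv_derive.
have x1 : (`]-1, 1[%classic x)%R by exact: tdom_sub hx.
have y1 : (`]-1, 1[%classic y')%R by exact: tdom_sub hy.
rewrite /geps hl hly eqxx.
have X0 n : (0 <= (expR (- (n%:R * eps)))%:E * mu F n a x)%E.
  by rewrite mule_ge0 ?lee_fin ?expR_ge0 // (le_trans _ (mu_ge1 F a x n x1)).
have Y0 n : (0 <= (expR (- (n%:R * eps)))%:E * mu F n b y')%E.
  by rewrite mule_ge0 ?lee_fin ?expR_ge0 // (le_trans _ (mu_ge1 F b y' n y1)).
apply/andP; split.
  rewrite [X in (_ <= X)%E]muleC; apply: series_cmp; [exact: expR_ge0|exact: ltW|exact: X0|exact: Y0|] => n.
  have h1 := mu_shift F b a y' n hy; rewrite xy in h1.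
  have h2 : (mu F n a x <= c%:E * mu F n.+1 b y')%E.
    apply: le_trans (lee_wpmul2l _ h1); last by rewrite lee_fin ltW.
    by rewrite muleA -EFinM mulrC cc' mul1e.
  rewrite muleA -EFinM expR_step [X in (_ <= X)%E]muleA [X in (_ <= X)%E]muleC.
  rewrite [X in (_ <= X)%E]muleC -muleA muleCA.
  by apply: lee_wpmul2l => //; rewrite lee_fin expR_ge0.
rewrite muleC; apply: series_cmp; [exact: ltW|exact: expR_ge0|exact: Y0|exact: X0|] => n.
have h1 := mu_shift F a b x n hx; rewrite -/y' -/c in h1.
rewrite [X in (_ <= X)%E]muleA -EFinM expR_step' muleCA.
apply: lee_wpmul2l => //; rewrite lee_fin expR_ge0 //.
Qed.
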